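(* Let $A$ be a commutative ring, regarded as graded and concentrated in grade $0$, and let $B$ be a commutative $\mathbb{Z}$-graded $A$-algebra with $B_n=0$ for all $n<0$ and $B_0=A$. If $B_n\neq 0$ for some $n>0$, then the first Hochschild homology group $HH_1(B)$ of $B$ over $A$ is nontrivial.
   Context: $HH_*(B)$ denotes the Hochschild homology of the $A$-algebra $B$ relative to $A$ (for commutative $B$, $HH_1(B)$ is the module of Kähler differentials $\Omega^1_{B/A}$). *)

(* Defs.v *)
From HB Require Import structures.
From mathcomp Require Import all_boot all_order all_algebra.
Set Implicit Arguments. Unset Strict Implicit. Unset Printing Implicit Defensive.
Import Order.TTheory GRing.Theory Num.Theory.
Local Open Scope ring_scope.

(* A Z-grading of the commutative A-algebra B, where A is regarded as graded
   and concentrated in degree 0: Bg n is the set of homogeneous elements of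
   degree n. *)
Definition is_graded_algebra (A : comRingType) (B : comAlgType A)
    (Bg : int -> B -> Prop) : Prop :=
  (forall n, Bg n 0) /\
  (forall n x y, Bg n x -> Bg n y -> Bg n (x - y)) /\
  (forall m n x y, Bg m x -> Bg n y -> Bg (m + n)%R (x * y)) /\
  (forall a : A, Bg 0 (a%:A)) /\
      (forall x : B, exists (s : seq int) (f : int -> B),
          (forall i, Bg i (f i)) /\ x = \sum_(i <- s) f i) /\
      (forall (s : seq int) (f : int -> B), uniq s ->
          (forall i, Bg i (f i)) -> \sum_(i <- s) f i = 0 ->
          forall i, i \in s -> f i = 0).

(* Kähler differentials Omega^1_{B/A}, presented as the free B-module on
   symbols (d b), b in B, modulo the submodule generated by
   d(b+b') - db - db',  d(bb') - b db' - b' db,  d(a) (a in the image of A).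
   A formal sum  sum_i c_i d(b_i)  is encoded by the list [:: (c_i, b_i)].
   kd_eq is the congruence on formal sums whose quotient is Omega^1_{B/A}:
   the first four base relations present the free module, the last three
   the derivation relations (with arbitrary coefficient c, so the generated
   sub-B-module is obtained). *)
Inductive kd_eq (A : comRingType) (B : comAlgType A) :
    seq (B * B) -> seq (B * B) -> Prop :=
  | kd_refl s : kd_eq s s
  | kd_sym s t : kd_eq s t -> kd_eq t s
  | kd_trans s t u : kd_eq s t -> kd_eq t u -> kd_eq s u
  | kd_cat s s' t t' : kd_eq s t -> kd_eq s' t' -> kd_eq (s ++ s') (t ++ t')
  | kd_perm s t : perm_eq s t -> kd_eq s t
  | kd_addc c c' b : kd_eq [:: (c, b); (c', b)] [:: (c + c', b)]
  | kd_zero b : kd_eq [:: (0, b)] [::]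
  | kd_add c b b' : kd_eq [:: (c, b + b')] [:: (c, b); (c, b')]
  | kd_mul c b b' : kd_eq [:: (c, b * b')] [:: (c * b, b'); (c * b', b)]
  | kd_const c (a : A) : kd_eq [:: (c, a%:A)] [::].

(* HH_1(B) = Omega^1_{B/A} is nontrivial: some element is nonzero. *)
Definition HH1_nontrivial (A : comRingType) (B : comAlgType A) : Prop :=
  exists s : seq (B * B), ~ kd_eq s [::].

(* Main.v *)
Require Import Defs.
From HB Require Import structures.
From mathcomp Require Import all_boot all_order all_algebra.
From mathcomp Require Import zify ring.
From Stdlib Require Import Classical ClassicalEpsilon.
Import Order.TTheory GRing.Theory Num.Theory.
Local Open Scope ring_scope.

Set Implicit Arguments. Unset Strict Implicit.
Lemma Bg_add (A : comRingType) (B : comAlgType A) (Bg : int -> B -> Prop)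
  (hgr : is_graded_algebra Bg) n x y : Bg n x -> Bg n y -> Bg n (x + y).
Proof.
move=> hx hy; have [h0 [hs _]] := hgr.
have -> : x + y = x - (0 - y) by rewrite sub0r opprK.
by apply: (hs) => //; apply: (hs).
Qed.

Definition mask (B : zmodType) (s : seq int) (f : int -> B) i :=
  if i \in s then f i else 0.

Definition decomp (A : comRingType) (B : comAlgType A) (Bg : int -> B -> Prop)
  b s (f : int -> B) := uniq s /\ (forall i, Bg i (f i)) /\ b = \sum_(i <- s) f i.

Lemma sum_mask (B : zmodType) (s u : seq int) (f : int -> B) :
  uniq s -> uniq u -> {subset s <= u} ->
  \sum_(i <- u) mask s f i = \sum_(i <- s) f i.
Proof.
move=> us uu su; rewrite /mask -big_mkcond /= -big_filter.
apply: perm_big; apply: uniq_perm; first exact: filter_uniq.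
  exact: us.
by move=> i; rewrite mem_filter; case: (boolP (i \in s)) => // /su ->.
Qed.

Lemma decomp_add (A : comRingType) (B : comAlgType A) (Bg : int -> B -> Prop)
  (hgr : is_graded_algebra Bg) b b' s f t g :
  decomp Bg b s f -> decomp Bg b' t g ->
  decomp Bg (b + b') (undup (s ++ t)) (fun i => mask s f i + mask t g i).
Proof.
move=> [us [fs ->]] [ut [gt ->]]; split; first exact: undup_uniq.
have hm : forall s (f : int -> B), (forall i, Bg i (f i)) -> forall i, Bg i (mask s f i).
  move=> s0 f0 hf i; rewrite /mask; case: ifP => // _; by case: hgr.
split; first by move=> i; apply: (Bg_add hgr); apply: (hm).
rewrite big_split /= !sum_mask ?undup_uniq // => i; rewrite mem_undup mem_cat => ->; rewrite ?orbT //.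
Qed.

Lemma decomp_uniq (A : comRingType) (B : comAlgType A) (Bg : int -> B -> Prop)
  (hgr : is_graded_algebra Bg) b s f t g :
  decomp Bg b s f -> decomp Bg b t g -> forall k, mask s f k = mask t g k.
Proof.
move=> [us [fs eb]] [ut [gt eb']] k.
have [h0 [hs [_ [_ [_ hds]]]]] := hgr.
have hm : forall s (f : int -> B), (forall i, Bg i (f i)) -> forall i, Bg i (mask s f i).
  move=> s0 f0 hf i; rewrite /mask; case: ifP => // _.
set u := undup (s ++ t).
have su : {subset s <= u} by move=> i; rewrite mem_undup mem_cat => ->.
have tu : {subset t <= u} by move=> i; rewrite mem_undup mem_cat => ->; rewrite orbT.
have := hds u (fun i => mask s f i - mask t g i) (undup_uniq _).
case: (boolP (k \in u)) => ku.
  move=> H; apply/eqP; rewrite -subr_eq0; apply/eqP; apply: (H) => //.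
    by move=> i; apply: (hs); apply: (hm).
  rewrite sumrB !sum_mask ?undup_uniq //; apply/eqP; rewrite subr_eq0; apply/eqP; exact: (etrans (esym eb) eb').
move=> _; rewrite /mask; case: ifP => [/su|]; first by rewrite (negbTE ku).
by case: ifP => [/tu|//]; rewrite (negbTE ku).
Qed.


Lemma decomp_hom (A : comRingType) (B : comAlgType A) (Bg : int -> B -> Prop)
  (hgr : is_graded_algebra Bg) m x :
  Bg m x -> decomp Bg x [:: m] (fun i => if i == m then x else 0).
Proof.
move=> hx; have [h0 _] := hgr; split=> //; split.
  by move=> i; case: eqP => [->|].
by rewrite big_seq1 eqxx.
Qed.

Lemma decomp_ex (A : comRingType) (B : comAlgType A) (Bg : int -> B -> Prop)
  (hgr : is_graded_algebra Bg) b : exists s f, decomp Bg b s f.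
Proof.
have [h0 [_ [_ [_ [hex _]]]]] := hgr.
have [s0 [f0 [hf ->]]] := hex b.
elim: s0 => [|i s0 [s [f IH]]].
  exists [::], (fun _ => 0); rewrite big_nil; split=> //; split=> //.
  by rewrite big_nil.
rewrite big_cons; eexists; eexists.
apply: (decomp_add hgr) IH; exact: (decomp_hom hgr).
Qed.

Lemma comp_ex (A : comRingType) (B : comAlgType A) (Bg : int -> B -> Prop)
  (hgr : is_graded_algebra Bg) : exists comp : int -> B -> B,
  (forall k x y, comp k (x + y) = comp k x + comp k y) /\
  (forall k m x, Bg m x -> comp k x = if k == m then x else 0).
Proof.
pose P k b y := exists s f, decomp Bg b s f /\ y = mask s f k.
have ex : forall k b, exists y, P k b y.
  move=> k b; have [s [f d]] := decomp_ex hgr b; by exists (mask s f k), s, f.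
have un : forall k b y y', P k b y -> P k b y' -> y = y'.
  move=> k b y y' [s [f [d ->]]] [t [g [d' ->]]]; exact: (decomp_uniq hgr d d').
pose comp k b := proj1_sig (constructive_indefinite_description _ (ex k b)).
have cP : forall k b, P k b (comp k b).
  move=> k b; exact: (proj2_sig (constructive_indefinite_description _ (ex k b))).
exists comp; split.
  move=> k x y; apply: (un k (x + y)); first exact: cP.
  have [s [f [d ->]]] := cP k x; have [t [g [d' ->]]] := cP k y.
  do 2 eexists; split; first exact: (decomp_add hgr d d').
  by rewrite /mask mem_undup mem_cat; case: (k \in s); case: (k \in t); rewrite ?addr0.
move=> k m x hx; apply: (un k x); first exact: cP.
exists [:: m], (fun i => if i == m then x else 0); split; first exact: decomp_hom.
by rewrite /mask inE; case: eqP.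
Qed.

Lemma ext1 (A : comRingType) (B : comAlgType A) (Bg : int -> B -> Prop)
  (hgr : is_graded_algebra Bg) (h : B -> B) :
  (forall x y, h (x + y) = h x + h y) -> (forall m x, Bg m x -> h x = 0) ->
  forall b, h b = 0.
Proof.
move=> hadd hh b; have [h0 [_ [_ [_ [hex _]]]]] := hgr.
have [s0 [f0 [hf ->]]] := hex b.
elim: s0 => [|i s0 IH]; first by rewrite big_nil (hh 0 0).
by rewrite big_cons hadd IH (hh i) ?addr0.
Qed.

Lemma ext2 (A : comRingType) (B : comAlgType A) (Bg : int -> B -> Prop)
  (hgr : is_graded_algebra Bg) (F : B -> B -> B) :
  (forall x y z, F (x + y) z = F x z + F y z) ->
  (forall x y z, F x (y + z) = F x y + F x z) ->
  (forall i j x y, Bg i x -> Bg j y -> F x y = 0) -> forall x y, F x y = 0.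
Proof.
move=> h1 h2 hh x y.
apply: (ext1 hgr (h := fun x => F x y)) => // m x' hx.
apply: (ext1 hgr (h := fun y => F x' y)) => // j y' hy.
exact: hh hx hy.
Qed.

Lemma min_nat (P : nat -> Prop) : (exists m, P m) ->
  exists m, P m /\ forall k, (k < m)%N -> ~ P k.
Proof.
move=> [m Pm].
suff: forall N m, (m <= N)%N -> P m -> exists m, P m /\ forall k, (k < m)%N -> ~ P k.
  by move=> H; apply: (H m m).
elim=> [|N IH] m' hm Pm'.
  by exists m'; split=> // k hk; move: hm; rewrite leqn0 => /eqP hm; rewrite hm ltn0 in hk.
destruct (classic (exists k, (k < m')%N /\ P k)) as [[k [hk Pk]]|nk].
  apply: (IH k) => //; by rewrite -ltnS (leq_trans hk).
by exists m'; split=> // k hk Pk; apply: nk; exists k.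
Qed.

Theorem lemma5p3 (A : comRingType) (B : comAlgType A) (Bg : int -> B -> Prop)
  (hgr : is_graded_algebra Bg)
  (hneg : forall (n : int) (x : B), n < 0 -> Bg n x -> x = 0)
  (h0inj : injective (fun a : A => a%:A : B))
  (h0surj : forall x : B, Bg 0 x -> exists a : A, x = a%:A)
  (hpos : exists (n : int) (x : B), 0 < n /\ Bg n x /\ x <> 0) :
  HH1_nontrivial B.
Proof.
have [h0 [hs [hmul [hA _]]]] := hgr.
have [comp [C1 C2]] := comp_ex hgr.
have Z0 : forall k, comp k 0 = 0 by move=> k; rewrite (C2 k 0 0 (h0 0)); case: eqP.
have [m [[m0 [x [hx xn0]]] hmin]] : exists m, ((0 < m)%N /\ exists x, Bg m%:Z x /\ x <> 0)
   /\ forall k, (k < m)%N -> ~ ((0 < k)%N /\ exists x, Bg k%:Z x /\ x <> 0).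
  apply: min_nat; have [[n|n] [x [hn [hx xn0]]]] := hpos; last by [].
  by exists n; split=> //; exists x.
pose n : int := m%:Z.
have n0 : 0 < n by rewrite /n ltz_nat.
have hmin' : forall i y, 0 < i -> i < n -> Bg i y -> y = 0.
  move=> [k|k] y // hk hkn hy; apply: NNPP => yn0; apply: (hmin k).
    by rewrite -ltz_nat.
  by split; [rewrite -ltz_nat | exists y].
have homsplit : forall i x, Bg i x -> x = 0 \/ 0 <= i.
  move=> i y hy; case: (ltrP i 0) => hi; [left; exact: hneg hi hy | by right].
have hp0 : forall i j x y, Bg i x -> Bg j y -> comp 0 (x * y) = comp 0 x * comp 0 y.
  move=> i j y z hy hz.
  have [->|i0] := homsplit _ _ hy; first by rewrite mul0r Z0 mul0r.
  have [->|j0] := homsplit _ _ hz; first by rewrite mulr0 Z0 mulr0.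
  rewrite (C2 _ _ _ (hmul _ _ _ _ hy hz)) (C2 _ _ _ hy) (C2 _ _ _ hz).
  case: (eqVneq (0:int) i) => [<-|ni]; case: (eqVneq (0:int) j) => [<-|nj];
    rewrite ?mulr0 ?mul0r ?add0r ?eqxx //; rewrite ifF //; lia.
have hpn : forall i j x y, Bg i x -> Bg j y ->
    comp n (x * y) = comp 0 x * comp n y + comp 0 y * comp n x.
  move=> i j y z hy hz.
  have [->|i0] := homsplit _ _ hy; first by rewrite mul0r !Z0 !mul0r mulr0 addr0.
  have [->|j0] := homsplit _ _ hz; first by rewrite mulr0 !Z0 !mul0r mulr0 addr0.
  rewrite (C2 _ _ _ (hmul _ _ _ _ hy hz)) !(C2 _ _ _ hy) !(C2 _ _ _ hz).
  case: (eqVneq (0:int) i) => [ei|ni]; case: (eqVneq (0:int) j) => [ej|nj].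
  - subst i j; have nn : (n == 0) = false by lia.
    by rewrite add0r nn !mulr0 addr0.
  - subst i; rewrite add0r mul0r addr0; by case: (n == j); rewrite ?mulr0.
  - subst j; rewrite addr0 mul0r add0r; by case: (n == i); rewrite ?mulr0 // mulrC.


  - rewrite !mul0r addr0; case: (eqVneq n (i + j)) => // e.
    by rewrite (hmin' i y) ?mul0r //; lia.
have M0 : forall x y, comp 0 (x * y) = comp 0 x * comp 0 y.
  move=> y z; apply/eqP; rewrite -subr_eq0; apply/eqP; move: y z.
  apply: (ext2 hgr (F := fun y z => comp 0 (y * z) - comp 0 y * comp 0 z)).
  - by move=> a b c; rewrite mulrDl !C1; ring.
  - by move=> a b c; rewrite mulrDr !C1; ring.
  - by move=> i j a b ha hb; rewrite (hp0 _ _ _ _ ha hb) subrr.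
have Mn : forall x y, comp n (x * y) = comp 0 x * comp n y + comp 0 y * comp n x.
  move=> y z; apply/eqP; rewrite -subr_eq0; apply/eqP; move: y z.
  apply: (ext2 hgr (F := fun y z => comp n (y * z) - (comp 0 y * comp n z + comp 0 z * comp n y))).
  - by move=> a b c; rewrite mulrDl !C1; ring.
  - by move=> a b c; rewrite mulrDr !C1; ring.
  - by move=> i j a b ha hb; rewrite (hpn _ _ _ _ ha hb) subrr.
pose phi (s : seq (B * B)) := \sum_(p <- s) comp 0 p.1 * comp n p.2.
have inv : forall s t, kd_eq s t -> phi s = phi t.
  move=> s t; elim => {s t}.
  - by [].
  - by move=> s t _ ->.
  - by move=> s t u _ -> _ ->.
  - by move=> s s' t t' _ e1 _ e2; rewrite /phi !big_cat /= -/(phi s) -/(phi t) e1 -/(phi s') e2.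
  - by move=> s t hp; rewrite /phi; apply: perm_big.
  - by move=> c c' b; rewrite /phi !big_cons !big_nil /= C1; ring.
  - by move=> b; rewrite /phi !big_cons !big_nil /= Z0 mul0r addr0.
  - by move=> c b b'; rewrite /phi !big_cons !big_nil /= C1; ring.
  - by move=> c b b'; rewrite /phi !big_cons !big_nil /= Mn !M0; ring.
  - move=> c a; rewrite /phi !big_cons !big_nil /= (C2 n 0 _ (hA a)).
    by rewrite ifF ?mulr0 ?addr0 //; lia.
exists [:: (1, x)] => /inv; rewrite /phi big_cons !big_nil /=.
have -> : comp 0 1 = 1.
  by rewrite (C2 0 0 1) // -(scale1r (1 : B)); apply: hA.
by rewrite (C2 n n x hx) eqxx mul1r addr0.
Qed.
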